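(* Let $m\ge 2$ and $c\ge 1$. Then the best-worst rule $s=(c,m)$ admits no non-convergent Nash equilibrium.
   Context: Setting: voters' ideal points are distributed uniformly (unit mass, Lebesgue measure) on the issue space $[0,1]$. There are $m\ge 2$ candidates; a profile is $x=(x_1,\dots,x_m)\in[0,1]^m$, where $x_i$ is the platform of candidate $i$. A voter with ideal point $y$ ranks candidates by distance $|x_i-y|$ (closer is better); ties are broken by a fair lottery (uniformly random strict order among tied candidates). Fix $c\ge 0$. Under the best-worst rule $s=(c,m)$, a candidate receives $1$ point from each voter ranking her first, $-c$ points from each voter ranking her last ($m$-th), and $0$ otherwise. Candidate $i$'s score $v_i(x)$ is the expected total number of points received. A (pure-strategy Nash) equilibrium is a profile $x^*$ with $v_i(x^* )\ge v_i(t,x^*_{-i})$ for all $i$ and $t\in[0,1]$, where $(t,x_{-i})$ denotes $x$ with $x_i$ replaced by $t$. A non-convergent Nash equilibrium (NCNE) is an equilibrium in which at least two platforms are distinct. *)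

(* Defs.v *)
From Stdlib Require Import Reals Lra Lia List ClassicalEpsilon.
Import ListNotations.
Open Scope R_scope.

(* A profile of m candidates is a function x : nat -> R; only the values
   x 0, ..., x (m-1) are meaningful. *)

(* Integral over [0,1] of f (Riemann integral; 0 if f is not integrable,
   which never happens for the piecewise-constant integrands below). *)
Definition integral01 (f : R -> R) : R :=
  match excluded_middle_informative
          (exists v, exists pr : Riemann_integrable f 0 1, RiemannInt pr = v) with
  | left H => proj1_sig (constructive_indefinite_description _ H)
  | right _ => 0
  end.

Definition dist (x : nat -> R) (j : nat) (y : R) : R := Rabs (x j - y).

Definition min_dist (m : nat) (x : nat -> R) (y : R) : R :=
  fold_right Rmin (dist x 0 y) (map (fun j => dist x j y) (seq 0 m)).
Definition max_dist (m : nat) (x : nat -> R) (y : R) : R :=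
  fold_right Rmax (dist x 0 y) (map (fun j => dist x j y) (seq 0 m)).

Definition n_at (m : nat) (x : nat -> R) (y d : R) : nat :=
  length (filter (fun j => if Req_EM_T (dist x j y) d then true else false)
                 (seq 0 m)).

(* probability (under the fair tie-breaking lottery) that voter y ranks
   candidate i first, resp. last (m-th) *)
Definition p_first (m : nat) (x : nat -> R) (i : nat) (y : R) : R :=
  if Req_EM_T (dist x i y) (min_dist m x y)
  then / INR (n_at m x y (min_dist m x y)) else 0.
Definition p_last (m : nat) (x : nat -> R) (i : nat) (y : R) : R :=
  if Req_EM_T (dist x i y) (max_dist m x y)
  then / INR (n_at m x y (max_dist m x y)) else 0.

(* score of candidate i under the best-worst rule s = (c, m):
   expected total points, voters uniform on [0,1] *)
Definition score (m : nat) (c : R) (x : nat -> R) (i : nat) : R :=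
  integral01 (fun y => p_first m x i y - c * p_last m x i y).

Definition update (x : nat -> R) (i : nat) (t : R) : nat -> R :=
  fun j => if Nat.eq_dec j i then t else x j.

Definition is_profile (m : nat) (x : nat -> R) : Prop :=
  forall j, (j < m)%nat -> 0 <= x j <= 1.

Definition is_equilibrium (m : nat) (c : R) (x : nat -> R) : Prop :=
  is_profile m x /\
  forall i t, (i < m)%nat -> 0 <= t <= 1 ->
    score m c (update x i t) i <= score m c x i.

Definition is_NCNE (m : nat) (c : R) (x : nat -> R) : Prop :=
  is_equilibrium m c x /\
  exists i j, (i < m)%nat /\ (j < m)%nat /\ x i <> x j.

(* Main.v *)
From Pilot Require Import Defs.
From Stdlib Require Import Reals Lra Lia List Classical ClassicalEpsilon.
From Coquelicot Require Import Coquelicot.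
Import ListNotations.
Open Scope R_scope.
Notation dst := Pilot.Defs.dist.

Lemma integral01_RInt f : ex_RInt f 0 1 -> integral01 f = RInt f 0 1.
Proof.
  intros H. unfold integral01.
  destruct excluded_middle_informative as [e|n].
  - destruct constructive_indefinite_description as [v [pr Hv]]. simpl.
    rewrite <- Hv, <- RInt_Reals. reflexivity.
  - exfalso; apply n. exists (RInt f 0 1), (ex_RInt_Reals_0 _ _ _ H).
    rewrite <- RInt_Reals. reflexivity.
Qed.

Lemma step_int (f : R -> R) (L : list R) : forall a b, a < b ->
  (forall y z, a < y -> y <= z -> z < b -> (forall p, In p L -> ~ (y <= p <= z)) -> f y = f z) ->
  ex_RInt f a b.
Proof.
  induction L as [|p L IH]; intros a b Hab H.
  - apply (ex_RInt_ext (fun _ => f ((a+b)/2))).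
    + intros x Hx. rewrite Rmin_left in Hx by lra. rewrite Rmax_right in Hx by lra.
      destruct (Rle_dec x ((a+b)/2)).
      * symmetry; apply H; try lra. intros p Hp; destruct Hp.
      * apply H; try lra. intros p Hp; destruct Hp.
    + apply ex_RInt_const.
  - destruct (Rlt_dec a p); [destruct (Rlt_dec p b)|].
    + apply ex_RInt_Chasles with p.
      * apply IH; auto. intros y z H1 H2 H3 H4. apply H; try lra.
        intros q [<-|Hq]; [lra|]. auto.
      * apply IH; auto. intros y z H1 H2 H3 H4. apply H; try lra.
        intros q [<-|Hq]; [lra|]. auto.
    + apply IH; auto. intros y z H1 H2 H3 H4. apply H; try lra.
      intros q [<-|Hq]; [lra|]. auto.
    + apply IH; auto. intros y z H1 H2 H3 H4. apply H; try lra.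
      intros q [<-|Hq]; [lra|]. auto.
Qed.

Lemma RInt_lower (h : R -> R) A d u v : ex_RInt h 0 1 -> 0 <= u -> u < v -> v <= 1 -> 0 < d ->
  (forall y, 0 <= y <= 1 -> A <= h y) -> (forall y, u <= y <= v -> A + d <= h y) ->
  A < RInt h 0 1.
Proof.
  intros Hi Hu Huv Hv Hd H1 H2.
  assert (E1 : ex_RInt h 0 u) by (apply (@ex_RInt_Chasles_1 R_CompleteNormedModule) with 1; auto; lra).
  assert (E2 : ex_RInt h u 1) by (apply (@ex_RInt_Chasles_2 R_CompleteNormedModule) with 0; auto; lra).
  assert (E3 : ex_RInt h u v) by (apply (@ex_RInt_Chasles_1 R_CompleteNormedModule) with 1; auto; lra).
  assert (E4 : ex_RInt h v 1) by (apply (@ex_RInt_Chasles_2 R_CompleteNormedModule) with u; auto; lra).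
  rewrite <- (RInt_Chasles h 0 u 1) by auto.
  rewrite <- (RInt_Chasles h u v 1) by auto.
  assert (B1 : RInt (fun _ => A) 0 u <= RInt h 0 u).
  { apply RInt_le; auto. apply ex_RInt_const. intros; apply H1; lra. }
  assert (B2 : RInt (fun _ => A + d) u v <= RInt h u v).
  { apply RInt_le; auto; try lra. apply ex_RInt_const. intros; apply H2; lra. }
  assert (B3 : RInt (fun _ => A) v 1 <= RInt h v 1).
  { apply RInt_le; auto. apply ex_RInt_const. intros; apply H1; lra. }
  rewrite !RInt_const in B1, B2, B3. unfold scal in *; simpl in *.
  unfold mult in *; simpl in *. unfold plus; simpl. nra.
Qed.

Fixpoint sumL (f : nat -> R) (l : list nat) : R :=
  match l with [] => 0 | i :: l' => f i + sumL f l' end.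

Lemma sumL_RInt (G : nat -> R -> R) a b l : (forall i, In i l -> ex_RInt (G i) a b) ->
  ex_RInt (fun y => sumL (fun i => G i y) l) a b /\
  RInt (fun y => sumL (fun i => G i y) l) a b = sumL (fun i => RInt (G i) a b) l.
Proof.
  induction l as [|i l IH]; intros H; simpl.
  - split. apply ex_RInt_const. rewrite RInt_const. unfold scal; simpl; unfold mult; simpl; ring.
  - destruct IH as [IH1 IH2]. intros; apply H; simpl; auto.
    assert (Hi : ex_RInt (G i) a b) by (apply H; simpl; auto).
    split.
    + apply (ex_RInt_plus (G i) (fun y => sumL (fun i => G i y) l)); auto.
    + rewrite <- IH2. apply (RInt_plus (G i) (fun y => sumL (fun i => G i y) l)); auto.
Qed.

Lemma sumL_le f g l : (forall i, In i l -> f i <= g i) -> sumL f l <= sumL g l.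
Proof. induction l; simpl; intros H; [lra|]. pose proof (H a (or_introl eq_refl)).
  assert (sumL f l <= sumL g l) by (apply IHl; auto). lra. Qed.

Lemma sumL_ge0 f l : (forall i, In i l -> 0 <= f i) -> 0 <= sumL f l.
Proof. induction l; simpl; intros H; [lra|]. pose proof (H a (or_introl eq_refl)).
  assert (0 <= sumL f l) by (apply IHl; auto). lra. Qed.

Lemma sumL_pos f l j : (forall i, In i l -> 0 <= f i) -> In j l -> 0 < f j -> 0 < sumL f l.
Proof.
  induction l as [|a l IH]; intros H Hj Hf; [destruct Hj|]. simpl.
  pose proof (H a (or_introl eq_refl)).
  destruct Hj as [<-|Hj].
  - assert (0 <= sumL f l) by (apply sumL_ge0; intros; apply H; simpl; auto). lra.
  - assert (0 < sumL f l) by (apply IH; auto; intros; apply H; simpl; auto). lra.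
Qed.

Lemma sumL_remove f l k : NoDup l -> In k l ->
  sumL f l = f k + sumL f (remove Nat.eq_dec k l).
Proof.
  induction l as [|a l IH]; intros ND Hk; [destruct Hk|]. inversion ND; subst. simpl.
  destruct (Nat.eq_dec k a) as [->|ne].
  - rewrite notin_remove by auto. ring.
  - destruct Hk as [<-|Hk]; [congruence|]. simpl. rewrite IH by auto. ring.
Qed.

Lemma sumL_strict f l k j : NoDup l -> In k l -> In j l -> j <> k ->
  (forall i, In i l -> i <> k -> 0 <= f i) -> 0 < f j -> f k < sumL f l.
Proof.
  intros ND Hk Hj Hjk H Hf. rewrite (sumL_remove f l k) by auto.
  assert (0 < sumL f (remove Nat.eq_dec k l)); [|lra].
  apply sumL_pos with j; auto.
  - intros i Hi. apply in_remove in Hi. destruct Hi; apply H; auto.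
  - apply in_in_remove; auto.
Qed.

Lemma fmin_le (g : nat -> R) d0 l j : In j l -> fold_right Rmin d0 (map g l) <= g j.
Proof. induction l; simpl; intros H; [destruct H|]. destruct H as [<-|H].
  apply Rmin_l. eapply Rle_trans; [apply Rmin_r|auto]. Qed.
Lemma fmin_in (g : nat -> R) d0 l : fold_right Rmin d0 (map g l) = d0 \/
  exists j, In j l /\ fold_right Rmin d0 (map g l) = g j.
Proof. induction l; simpl; auto. destruct (Rle_dec (g a) (fold_right Rmin d0 (map g l))).
  right; exists a; split; auto; apply Rmin_left; auto. rewrite Rmin_right by lra. destruct IHl as [H|[j [H1 H2]]]; auto. right; exists j; auto. Qed.
Lemma fmax_ge (g : nat -> R) d0 l j : In j l -> g j <= fold_right Rmax d0 (map g l).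
Proof. induction l; simpl; intros H; [destruct H|]. destruct H as [<-|H].
  apply Rmax_l. eapply Rle_trans; [apply IHl; auto|apply Rmax_r]. Qed.
Lemma fmax_in (g : nat -> R) d0 l : fold_right Rmax d0 (map g l) = d0 \/
  exists j, In j l /\ fold_right Rmax d0 (map g l) = g j.
Proof. induction l; simpl; auto. destruct (Rle_dec (g a) (fold_right Rmax d0 (map g l))).
  rewrite Rmax_right by lra. destruct IHl as [H|[j [H1 H2]]]; auto. right; exists j; auto. right; exists a; split; auto; apply Rmax_left; lra. Qed.

Lemma min_le m x y j : (j < m)%nat -> min_dist m x y <= dst x j y.
Proof. intros. unfold min_dist. apply (fmin_le (fun j => dst x j y)). apply in_seq; lia. Qed.
Lemma max_ge m x y j : (j < m)%nat -> dst x j y <= max_dist m x y.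
Proof. intros. unfold max_dist. apply (fmax_ge (fun j => dst x j y)). apply in_seq; lia. Qed.

Lemma is_min m x y i : (i < m)%nat ->
  (dst x i y = min_dist m x y <-> forall j, (j < m)%nat -> dst x i y <= dst x j y).
Proof.
  intros Hi; split.
  - intros E j Hj. rewrite E. apply min_le; auto.
  - intros H. apply Rle_antisym.
    + unfold min_dist. destruct (fmin_in (fun j => dst x j y) (dst x 0 y) (seq 0 m)) as [E|[j [Hj E]]];
      rewrite E. apply H; lia. apply H. apply in_seq in Hj; lia.
    + apply min_le; auto.
Qed.
Lemma is_max m x y i : (i < m)%nat ->
  (dst x i y = max_dist m x y <-> forall j, (j < m)%nat -> dst x j y <= dst x i y).
Proof.
  intros Hi; split.
  - intros E j Hj. rewrite E. apply max_ge; auto.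
  - intros H. apply Rle_antisym.
    + apply max_ge; auto.
    + unfold max_dist. destruct (fmax_in (fun j => dst x j y) (dst x 0 y) (seq 0 m)) as [E|[j [Hj E]]];
      rewrite E. apply H; lia. apply H. apply in_seq in Hj; lia.
Qed.

Lemma inv_nonneg n : 0 <= / INR n.
Proof. destruct n. simpl; rewrite Rinv_0; lra. apply Rlt_le, Rinv_0_lt_compat, lt_0_INR; lia. Qed.

Lemma pf_ge0 m x i y : 0 <= p_first m x i y.
Proof. unfold p_first; destruct Req_EM_T; [apply inv_nonneg|lra]. Qed.
Lemma pl_ge0 m x i y : 0 <= p_last m x i y.
Proof. unfold p_last; destruct Req_EM_T; [apply inv_nonneg|lra]. Qed.

Lemma pf_zero m x i y j : (j < m)%nat -> dst x j y < dst x i y -> p_first m x i y = 0.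
Proof. intros Hj H. unfold p_first; destruct Req_EM_T; auto.
  pose proof (min_le m x y j Hj). lra. Qed.
Lemma pl_zero m x i y j : (j < m)%nat -> dst x i y < dst x j y -> p_last m x i y = 0.
Proof. intros Hj H. unfold p_last; destruct Req_EM_T; auto.
  pose proof (max_ge m x y j Hj). lra. Qed.

Lemma filter_one (p : nat -> bool) m i : (i < m)%nat ->
  (forall j, (j < m)%nat -> (p j = true <-> j = i)) -> length (filter p (seq 0 m)) = 1%nat.
Proof.
  revert i. induction m; intros i Hi H; [lia|].
  rewrite seq_S, filter_app, length_app. simpl.
  destruct (Nat.eq_dec i m) as [->|ne].
  - assert (p m = true) by (apply H; lia). rewrite H0. simpl.
    assert (length (filter p (seq 0 m)) = 0%nat); [|lia].
    rewrite <- (filter_ext_in (fun _ => false)). clear. induction (seq 0 m); simpl; auto.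
    intros a Ha. apply in_seq in Ha. destruct (p a) eqn:E; auto. apply H in E; lia.
  - assert (p m = false). { destruct (p m) eqn:E; auto. apply H in E; lia. }
    rewrite H0. simpl. rewrite (IHm i); try lia. intros j Hj; apply H; lia.
Qed.

Lemma filter_all (p : nat -> bool) m :
  (forall j, (j < m)%nat -> p j = true) -> length (filter p (seq 0 m)) = m.
Proof.
  induction m; intros H; auto. rewrite seq_S, filter_app, length_app. simpl.
  rewrite H by lia. simpl. rewrite IHm; [lia|]. intros; apply H; lia.
Qed.

Lemma pf_one m x i y : (i < m)%nat -> (forall j, (j < m)%nat -> j <> i -> dst x i y < dst x j y) ->
  p_first m x i y = 1.
Proof.
  intros Hi H. assert (E : dst x i y = min_dist m x y).
  { apply is_min; auto. intros j Hj. destruct (Nat.eq_dec j i) as [->|ne]; [lra|].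
    apply Rlt_le, H; auto. }
  unfold p_first. destruct Req_EM_T; [|contradiction]. rewrite <- E.
  unfold n_at. rewrite (filter_one _ m i Hi). simpl; lra.
  intros j Hj. destruct Req_EM_T; split; intros; auto; try discriminate.
  destruct (Nat.eq_dec j i); auto. specialize (H j Hj n). lra. subst; congruence.
Qed.
Lemma pl_one m x i y : (i < m)%nat -> (forall j, (j < m)%nat -> j <> i -> dst x j y < dst x i y) ->
  p_last m x i y = 1.
Proof.
  intros Hi H. assert (E : dst x i y = max_dist m x y).
  { apply is_max; auto. intros j Hj. destruct (Nat.eq_dec j i) as [->|ne]; [lra|].
    apply Rlt_le, H; auto. }
  unfold p_last. destruct Req_EM_T; [|contradiction]. rewrite <- E.
  unfold n_at. rewrite (filter_one _ m i Hi). simpl; lra.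
  intros j Hj. destruct Req_EM_T; split; intros; auto; try discriminate.
  destruct (Nat.eq_dec j i); auto. specialize (H j Hj n). lra. subst; congruence.
Qed.

Lemma p_alleq m x i y : (i < m)%nat -> (forall j, (j < m)%nat -> dst x j y = dst x i y) ->
  p_first m x i y = / INR m /\ p_last m x i y = / INR m.
Proof.
  intros Hi H.
  assert (E1 : dst x i y = min_dist m x y).
  { apply is_min; auto. intros j Hj. rewrite (H j Hj); lra. }
  assert (E2 : dst x i y = max_dist m x y).
  { apply is_max; auto. intros j Hj. rewrite (H j Hj); lra. }
  unfold p_first, p_last. destruct Req_EM_T; [|contradiction]. destruct Req_EM_T; [|contradiction].
  rewrite <- E1, <- E2. unfold n_at. rewrite !filter_all. auto.
  all: intros j Hj; destruct Req_EM_T; auto; exfalso; apply n; apply H; auto.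
Qed.

Lemma pf_inv m x i y z : (i < m)%nat ->
  (forall j k, (j < m)%nat -> (k < m)%nat -> (dst x j y <= dst x k y <-> dst x j z <= dst x k z)) ->
  p_first m x i y = p_first m x i z.
Proof.
  intros Hi H. pose proof (is_min m x y i Hi). pose proof (is_min m x z i Hi).
  unfold p_first. destruct Req_EM_T as [e1|n1]; destruct Req_EM_T as [e2|n2].
  - rewrite <- e1, <- e2. unfold n_at. erewrite filter_ext_in; [reflexivity|].
    intros j Hj. apply in_seq in Hj.
    destruct (H j i) as [A1 A2]; try lia. destruct (H i j) as [B1 B2]; try lia.
    destruct Req_EM_T; destruct Req_EM_T; auto; exfalso; [apply n|apply n]; apply Rle_antisym; try tauto.
    + apply A1; lra.
    + apply B1; lra.
    + apply A2; lra.
    + apply B2; lra.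
  - exfalso; apply n2, H1. intros j Hj. apply (H i j); auto. apply H0; auto.
  - exfalso; apply n1, H0. intros j Hj. apply (H i j); auto. apply H1; auto.
  - auto.
Qed.
Lemma pl_inv m x i y z : (i < m)%nat ->
  (forall j k, (j < m)%nat -> (k < m)%nat -> (dst x j y <= dst x k y <-> dst x j z <= dst x k z)) ->
  p_last m x i y = p_last m x i z.
Proof.
  intros Hi H. pose proof (is_max m x y i Hi). pose proof (is_max m x z i Hi).
  unfold p_last. destruct Req_EM_T as [e1|n1]; destruct Req_EM_T as [e2|n2].
  - rewrite <- e1, <- e2. unfold n_at. erewrite filter_ext_in; [reflexivity|].
    intros j Hj. apply in_seq in Hj.
    destruct (H j i) as [A1 A2]; try lia. destruct (H i j) as [B1 B2]; try lia.
    destruct Req_EM_T; destruct Req_EM_T; auto; exfalso; [apply n|apply n]; apply Rle_antisym; try tauto.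
    + apply A1; lra.
    + apply B1; lra.
    + apply A2; lra.
    + apply B2; lra.
  - exfalso; apply n2, H1. intros j Hj. apply (H j i); auto. apply H0; auto.
  - exfalso; apply n1, H0. intros j Hj. apply (H j i); auto. apply H1; auto.
  - auto.
Qed.

Lemma abs_le_sq a b : Rabs a <= Rabs b <-> a * a <= b * b.
Proof. unfold Rabs; destruct Rcase_abs; destruct Rcase_abs; split; intros; nra. Qed.

Lemma cmp_inv A B y z : y <= z -> ~ (y <= (A + B) / 2 <= z) ->
  (Rabs (A - y) <= Rabs (B - y) <-> Rabs (A - z) <= Rabs (B - z)).
Proof.
  intros Hyz Hm. rewrite !abs_le_sq.
  destruct (Rlt_dec ((A+B)/2) y).
  - split; intros; nra.
  - assert (z < (A+B)/2) by lra. split; intros; nra.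
Qed.

Definition mids m (x : nat -> R) : list R :=
  flat_map (fun j => map (fun k => (x j + x k)/2) (seq 0 m)) (seq 0 m).

Lemma mids_in m x j k : (j < m)%nat -> (k < m)%nat -> In ((x j + x k)/2) (mids m x).
Proof. intros. unfold mids. apply in_flat_map. exists j; split. apply in_seq; lia.
  apply in_map_iff. exists k; split; auto. apply in_seq; lia. Qed.

Lemma integrand_int m c x i : (i < m)%nat ->
  ex_RInt (fun y => p_first m x i y - c * p_last m x i y) 0 1.
Proof.
  intros Hi. apply (step_int _ (mids m x)); [lra|].
  intros y z _ Hyz _ H.
  assert (C : forall j k, (j < m)%nat -> (k < m)%nat -> (dst x j y <= dst x k y <-> dst x j z <= dst x k z)).
  { intros j k Hj Hk. unfold Pilot.Defs.dist. apply cmp_inv; auto. apply H. apply mids_in; auto. }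
  rewrite (pf_inv m x i y z), (pl_inv m x i y z); auto.
Qed.

Lemma score_RInt m c x i : (i < m)%nat ->
  score m c x i = RInt (fun y => p_first m x i y - c * p_last m x i y) 0 1.
Proof. intros. unfold score. apply integral01_RInt, integrand_int; auto. Qed.

Lemma sum_ind (g : nat -> R) d r l :
  sumL (fun i => if Req_EM_T (g i) d then r else 0) l =
  INR (length (filter (fun j => if Req_EM_T (g j) d then true else false) l)) * r.
Proof. induction l; simpl; [lra|]. destruct Req_EM_T; rewrite IHl; [cbn [length]; rewrite S_INR|]; lra. Qed.

Lemma count_pos (g : nat -> R) d l j : In j l -> g j = d ->
  (0 < length (filter (fun j => if Req_EM_T (g j) d then true else false) l))%nat.
Proof. induction l; simpl; intros H E; [destruct H|]. destruct H as [<-|H].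
  destruct Req_EM_T; [simpl; lia|congruence]. destruct Req_EM_T; simpl; auto. lia. Qed.

Lemma sum_pf m x y : (0 < m)%nat -> sumL (fun i => p_first m x i y) (seq 0 m) = 1.
Proof.
  intros Hm. unfold p_first. rewrite sum_ind. unfold n_at.
  assert (exists j, (j < m)%nat /\ dst x j y = min_dist m x y) as [j [Hj E]].
  { unfold min_dist. destruct (fmin_in (fun j => dst x j y) (dst x 0 y) (seq 0 m)) as [E|[j [Hj E]]].
    exists 0%nat; auto. exists j; split; auto. apply in_seq in Hj; lia. }
  pose proof (count_pos (fun j => dst x j y) (min_dist m x y) (seq 0 m) j) as P.
  apply Rinv_r. apply not_0_INR. apply Nat.neq_0_lt_0, P; auto. apply in_seq; lia.
Qed.
Lemma sum_pl m x y : (0 < m)%nat -> sumL (fun i => p_last m x i y) (seq 0 m) = 1.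
Proof.
  intros Hm. unfold p_last. rewrite sum_ind. unfold n_at.
  assert (exists j, (j < m)%nat /\ dst x j y = max_dist m x y) as [j [Hj E]].
  { unfold max_dist. destruct (fmax_in (fun j => dst x j y) (dst x 0 y) (seq 0 m)) as [E|[j [Hj E]]].
    exists 0%nat; auto. exists j; split; auto. apply in_seq in Hj; lia. }
  pose proof (count_pos (fun j => dst x j y) (max_dist m x y) (seq 0 m) j) as P.
  apply Rinv_r. apply not_0_INR. apply Nat.neq_0_lt_0, P; auto. apply in_seq; lia.
Qed.

Lemma sumL_split f g l : sumL (fun i => f i - g i) l = sumL f l - sumL g l.
Proof. induction l; simpl; lra. Qed.
Lemma sumL_scal c f l : sumL (fun i => c * f i) l = c * sumL f l.
Proof. induction l; simpl; lra. Qed.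

Lemma sumL_ext f g l : (forall i, In i l -> f i = g i) -> sumL f l = sumL g l.
Proof. induction l; simpl; intros H; auto. rewrite H, IHl; auto. Qed.

Lemma sum_scores m c x : (0 < m)%nat -> sumL (fun i => score m c x i) (seq 0 m) = 1 - c.
Proof.
  intros Hm.
  assert (E : sumL (fun i => score m c x i) (seq 0 m) =
    sumL (fun i => RInt (fun y => p_first m x i y - c * p_last m x i y) 0 1) (seq 0 m)).
  { clear Hm. assert (forall i, In i (seq 0 m) -> score m c x i = RInt (fun y => p_first m x i y - c * p_last m x i y) 0 1).
    intros i Hi; apply score_RInt; apply in_seq in Hi; lia.
    apply sumL_ext; auto. }
  rewrite E.
  destruct (sumL_RInt (fun i y => p_first m x i y - c * p_last m x i y) 0 1 (seq 0 m)) as [_ R].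
  { intros i Hi; apply integrand_int; apply in_seq in Hi; lia. }
  rewrite <- R. rewrite (RInt_ext _ (fun _ => 1 - c)).
  rewrite RInt_const. unfold scal; simpl; unfold mult; simpl. ring.
  intros y _. rewrite (sumL_split (fun i => p_first m x i y) (fun i => c * p_last m x i y)), (sumL_scal c (fun i => p_last m x i y)), sum_pf, sum_pl by auto. change (1 - c * 1 = 1 - c). ring.
Qed.

Lemma gap (L : list R) a b : a < b -> exists s, a < s <= b /\ forall p, In p L -> ~ (a < p < s).
Proof.
  induction L as [|p L IH]; intros H.
  - exists b; split; [lra|]. intros p [].
  - destruct (IH H) as [s [Hs HL]].
    destruct (Rlt_dec a p); [destruct (Rlt_dec p s)|].
    + exists p; split; [lra|]. intros q [<-|Hq]; [lra|]. intros Hc. apply (HL q Hq); lra.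
    + exists s; split; auto. intros q [<-|Hq]; [lra|]. auto.
    + exists s; split; auto. intros q [<-|Hq]; [lra|]. auto.
Qed.

Lemma upd_eq x i t : update x i t i = t.
Proof. unfold update; destruct Nat.eq_dec; congruence. Qed.
Lemma upd_ne x i t j : j <> i -> update x i t j = x j.
Proof. unfold update; destruct Nat.eq_dec; congruence. Qed.

Lemma dev_pos m c x i j1 j2 : (i < m)%nat -> (j1 < m)%nat -> (j2 < m)%nat -> j1 <> i -> j2 <> i ->
  x j1 < x j2 -> 0 <= x j1 -> x j2 <= 1 ->
  exists t, 0 <= t <= 1 /\ 0 < score m c (update x i t) i.
Proof.
  intros Hi H1 H2 N1 N2 Hab Ha Hb.
  destruct (gap (map x (seq 0 m)) (x j1) (x j2) Hab) as [s [Hs G]].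
  set (t := (x j1 + s)/2). set (r := (s - x j1)/8).
  exists t; split; [unfold t; lra|].
  rewrite score_RInt by auto.
  apply (RInt_lower _ 0 1 t (t + r)); try (unfold t, r; lra).
  - apply integrand_int; auto.
  - intros y _. rewrite (pl_zero m _ i y (if Rle_dec t y then j1 else j2)).
    + pose proof (pf_ge0 m (update x i t) i y). lra.
    + destruct Rle_dec; auto.
    + unfold Pilot.Defs.dist. rewrite upd_eq.
      destruct Rle_dec; rewrite upd_ne by auto; unfold t in *;
      unfold Rabs; destruct Rcase_abs; destruct Rcase_abs; lra.
  - intros y Hy. rewrite (pl_zero m _ i y j1); auto.
    + rewrite pf_one; auto; [lra|]. intros j Hj Hji.
      unfold Pilot.Defs.dist. rewrite upd_eq, upd_ne by auto.
      assert (Hx : ~ (x j1 < x j < s)). { apply G. apply in_map. apply in_seq; lia. }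
      unfold r, t in *. unfold Rabs; destruct Rcase_abs; destruct Rcase_abs; lra.
    + unfold Pilot.Defs.dist. rewrite upd_eq, upd_ne by auto. unfold r, t in *.
      unfold Rabs; destruct Rcase_abs; destruct Rcase_abs; lra.
Qed.

Lemma dev_conv m c x i q : (i < m)%nat -> (forall j, (j < m)%nat -> j <> i -> x j = q) ->
  score m c (update x i q) i = (1 - c) / INR m.
Proof.
  intros Hi H. rewrite score_RInt by auto.
  rewrite (RInt_ext _ (fun _ => (1 - c) / INR m)).
  rewrite RInt_const. unfold scal; simpl; unfold mult; simpl. change ((1-0) * ((1 - c) / INR m) = (1 - c) / INR m). ring.
  intros y _. destruct (p_alleq m (update x i q) i y Hi) as [E1 E2].
  { intros j Hj. unfold Pilot.Defs.dist. rewrite upd_eq. destruct (Nat.eq_dec j i) as [->|ne].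
    rewrite upd_eq; auto. rewrite upd_ne, H; auto. }
  rewrite E1, E2. change (/ INR m - c * / INR m = (1 - c) / INR m). unfold Rdiv. ring.
Qed.

Lemma g2 c z i k y : (i < 2)%nat -> (k < 2)%nat -> k <> i ->
  (dst z i y < dst z k y -> p_first 2 z i y - c * p_last 2 z i y = 1) /\
  (dst z k y < dst z i y -> p_first 2 z i y - c * p_last 2 z i y = - c) /\
  (dst z i y = dst z k y -> p_first 2 z i y - c * p_last 2 z i y = (1 - c) / 2).
Proof.
  intros Hi Hk Hki. split; [|split]; intros H.
  - rewrite pf_one, (pl_zero 2 z i y k); auto; [lra|]. intros j Hj Hji.
    assert (j = k) by lia. subst; auto.
  - rewrite (pf_zero 2 z i y k), pl_one; auto; [lra|]. intros j Hj Hji.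
    assert (j = k) by lia. subst; auto.
  - destruct (p_alleq 2 z i y Hi) as [E1 E2].
    { intros j Hj. destruct (Nat.eq_dec j i) as [->|ne]; auto. assert (j = k) by lia. subst; auto. }
    rewrite E1, E2. simpl. field.
Qed.

Lemma abs_lt_sq a b : Rabs a < Rabs b <-> a * a < b * b.
Proof. unfold Rabs; destruct Rcase_abs; destruct Rcase_abs; split; intros; nra. Qed.

Lemma key_geo p q y : p <> q ->
  Rabs (q - y) < Rabs ((p + q)/2 - y) -> Rabs ((p+q)/2 - y) < Rabs (p - y).
Proof.
  intros Hpq. rewrite !abs_lt_sq. intros H.
  assert (0 < (q - p) * (q - p)). { assert (q - p <> 0) by lra. nra. }
  assert (((p+q)/2 - y) * ((p+q)/2 - y) - (p - y) * (p - y) =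
          ((q - y) * (q - y) - ((p+q)/2 - y) * ((p+q)/2 - y)) - (q - p) * (q - p) / 2) by field.
  lra.
Qed.

Lemma dev_m2 c x : 0 <= c -> x 0%nat <> x 1%nat -> 0 <= x 0%nat <= 1 -> 0 <= x 1%nat <= 1 ->
  1 - c < score 2 c (update x 0 ((x 0%nat + x 1%nat)/2)) 0 + score 2 c (update x 1 ((x 0%nat + x 1%nat)/2)) 1.
Proof.
  intros Hc Hpq Hp Hq.
  set (p := x 0%nat) in *. set (q := x 1%nat) in *. set (mu := (p + q)/2).
  rewrite !score_RInt by lia.
  set (f := fun y => p_first 2 (update x 0 mu) 0 y - c * p_last 2 (update x 0 mu) 0 y).
  set (g := fun y => p_first 2 (update x 1 mu) 1 y - c * p_last 2 (update x 1 mu) 1 y).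
  assert (If : ex_RInt f 0 1) by (apply integrand_int; lia).
  assert (Ig : ex_RInt g 0 1) by (apply integrand_int; lia).
  assert (E : RInt f 0 1 + RInt g 0 1 = RInt (fun y => f y + g y) 0 1).
  { symmetry. apply (RInt_plus f g); auto. }
  rewrite E.
  assert (D0 : forall y, dst (update x 0 mu) 0 y = Rabs (mu - y)) by (intros; unfold Pilot.Defs.dist; rewrite upd_eq; auto).
  assert (D1 : forall y, dst (update x 0 mu) 1 y = Rabs (q - y)) by (intros; unfold Pilot.Defs.dist; rewrite upd_ne; auto).
  assert (D2 : forall y, dst (update x 1 mu) 1 y = Rabs (mu - y)) by (intros; unfold Pilot.Defs.dist; rewrite upd_eq; auto).
  assert (D3 : forall y, dst (update x 1 mu) 0 y = Rabs (p - y)) by (intros; unfold Pilot.Defs.dist; rewrite upd_ne; auto).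
  set (r := Rabs (p - q) / 8).
  assert (Hr : 0 < r) by (unfold r; assert (p - q <> 0) by lra; pose proof (Rabs_pos_lt _ H); lra).
  apply (RInt_lower _ (1 - c) (1 + c) mu (mu + r)).
  - apply (ex_RInt_plus f g); auto.
  - unfold mu; lra.
  - lra.
  - unfold r, mu; unfold Rabs; destruct Rcase_abs; lra.
  - lra.
  - intros y _.
    destruct (g2 c (update x 0 mu) 0 1 y) as [A1 [A2 A3]]; try lia.
    destruct (g2 c (update x 1 mu) 1 0 y) as [B1 [B2 B3]]; try lia.
    rewrite D0, D1 in A1, A2, A3. rewrite D2, D3 in B1, B2, B3.
    pose proof (key_geo p q y Hpq) as K1.
    pose proof (key_geo q p y (not_eq_sym Hpq)) as K2.
    replace ((q + p)/2) with mu in K2 by (unfold mu; field). fold mu in K1.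
    unfold f, g.
    destruct (Rtotal_order (Rabs (mu - y)) (Rabs (q - y))) as [C1|[C1|C1]];
    destruct (Rtotal_order (Rabs (mu - y)) (Rabs (p - y))) as [C2|[C2|C2]].
    all: try (rewrite A1 by auto); try (rewrite A2 by auto); try (rewrite A3 by auto).
    all: try (rewrite B1 by auto); try (rewrite B2 by auto); try (rewrite B3 by auto).
    all: try lra.
  - intros y Hy.
    destruct (g2 c (update x 0 mu) 0 1 y) as [A1 [A2 A3]]; try lia.
    destruct (g2 c (update x 1 mu) 1 0 y) as [B1 [B2 B3]]; try lia.
    rewrite D0, D1 in A1. rewrite D2, D3 in B1.
    unfold f, g. rewrite A1, B1. lra.
    + unfold mu, r in *. destruct (Rlt_dec p q);
      unfold Rabs in *; repeat destruct Rcase_abs; lra.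
    + unfold mu, r in *. destruct (Rlt_dec p q);
      unfold Rabs in *; repeat destruct Rcase_abs; lra.
Qed.

Lemma eq_pos m c x i a b : is_equilibrium m c x -> (i < m)%nat -> (a < m)%nat -> (b < m)%nat ->
  a <> i -> b <> i -> x a <> x b -> 0 < score m c x i.
Proof.
  intros [Hp He] Hi Ha Hb Nai Nbi Nab.
  destruct (Rlt_dec (x a) (x b)).
  - destruct (dev_pos m c x i a b) as [t [Ht Hs]]; auto.
    apply Hp; auto. apply Hp; auto. specialize (He i t Hi Ht). lra.
  - destruct (dev_pos m c x i b a) as [t [Ht Hs]]; auto. lra.
    apply Hp; auto. apply Hp; auto. specialize (He i t Hi Ht). lra.
Qed.

Theorem proposition2 (m : nat) (c : R) :
  (2 <= m)%nat -> 1 <= c -> ~ (exists x : nat -> R, is_NCNE m c x).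
Proof.
  intros Hm Hc [x [[Hprof Heq] [i [j [Hi [Hj Hij]]]]]].
  assert (Hsum := sum_scores m c x ltac:(lia)).
  assert (EQ : is_equilibrium m c x) by (split; auto).
  destruct (Nat.eq_dec m 2) as [->|Hm3].
  - assert (Hx : x 0%nat <> x 1%nat).
    { destruct i as [|[|]]; destruct j as [|[|]]; try lia; auto. }
    pose proof (dev_m2 c x ltac:(lra) Hx (Hprof 0%nat ltac:(lia)) (Hprof 1%nat ltac:(lia))).
    assert (0 <= (x 0%nat + x 1%nat)/2 <= 1) by (pose proof (Hprof 0%nat ltac:(lia)); pose proof (Hprof 1%nat ltac:(lia)); lra).
    pose proof (Heq 0%nat _ ltac:(lia) H0). pose proof (Heq 1%nat _ ltac:(lia) H0).
    simpl in Hsum. lra.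
  - destruct (classic (exists i0, (i0 < m)%nat /\
        forall a b, (a < m)%nat -> (b < m)%nat -> a <> i0 -> b <> i0 -> x a = x b)) as [[i0 [Hi0 C]]|NC].
    + set (j0 := if Nat.eq_dec i0 0 then 1%nat else 0%nat).
      assert (Hj0 : (j0 < m)%nat /\ j0 <> i0) by (unfold j0; destruct Nat.eq_dec; lia).
      destruct Hj0 as [Hj0 Nj0].
      set (q := x j0).
      assert (Cq : forall a, (a < m)%nat -> a <> i0 -> x a = q) by (intros; apply C; auto).
      assert (Nq : x i0 <> q).
      { destruct (Nat.eq_dec i i0) as [->|ni]; destruct (Nat.eq_dec j i0) as [->|nj].
        - contradiction.
        - rewrite <- (Cq j); auto.
        - rewrite <- (Cq i); auto.
        - exfalso; apply Hij. rewrite (Cq i), (Cq j); auto. }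
      assert (Hk : exists k, (k < 3)%nat /\ k <> i0 /\ k <> j0).
      { destruct (Nat.eq_dec i0 0); destruct (Nat.eq_dec j0 0); destruct (Nat.eq_dec i0 1);
        destruct (Nat.eq_dec j0 1); first [exists 0%nat; lia | exists 1%nat; lia | exists 2%nat; lia]. }
      destruct Hk as [k [Hk1 [Hk2 Hk3]]].
      assert (Pos : forall a, (a < m)%nat -> a <> i0 -> 0 < score m c x a).
      { intros a Ha Nai.
        destruct (Nat.eq_dec a j0) as [->|naj].
        - apply (eq_pos m c x j0 i0 k); auto; try lia. rewrite (Cq k); auto; lia.
        - apply (eq_pos m c x a i0 j0); auto; try lia. }
      assert (Dc : score m c (update x i0 q) i0 = (1 - c) / INR m) by (apply dev_conv; auto).
      assert (Hq01 : 0 <= q <= 1) by (apply Hprof; auto).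
      pose proof (Heq i0 q Hi0 Hq01) as Hle.
      assert (St : score m c x i0 < sumL (fun a => score m c x a) (seq 0 m)).
      { apply (sumL_strict _ _ i0 j0). apply seq_NoDup. apply in_seq; lia. apply in_seq; lia. auto.
        intros a Ha Na. apply Rlt_le, Pos; auto. apply in_seq in Ha; lia. apply Pos; auto. }
      assert (Mb : 1 - c <= (1 - c) / INR m).
      { assert (HM : 3 <= INR m) by (replace 3 with (INR 3) by (simpl; ring); apply le_INR; lia).
        assert (0 < / INR m <= 1).
        { split. apply Rinv_0_lt_compat; lra. rewrite <- Rinv_1. apply Rinv_le_contravar; lra. }
        unfold Rdiv. nra. }
      lra.
    + assert (Pos : forall a, (a < m)%nat -> 0 < score m c x a).
      { intros a Ha.
        destruct (classic (exists b d, (b < m)%nat /\ (d < m)%nat /\ b <> a /\ d <> a /\ x b <> x d))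
          as [[b [d [Hb [Hd [Nb [Nd Nbd]]]]]]|NE].
        - apply (eq_pos m c x a b d); auto.
        - exfalso. apply NC. exists a; split; auto. intros b d Hb Hd Nb Nd.
          destruct (Req_dec (x b) (x d)); auto. exfalso; apply NE; exists b, d; auto. }
      assert (St : score m c x 0 < sumL (fun a => score m c x a) (seq 0 m)).
      { apply (sumL_strict _ _ 0 1). apply seq_NoDup. apply in_seq; lia. apply in_seq; lia. auto.
        intros a Ha Na. apply Rlt_le, Pos; auto. apply in_seq in Ha; lia. apply Pos; lia. }
      pose proof (Pos 0%nat ltac:(lia)). lra.
Qed.
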